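(* Let $G=(V,E)$ be a finite graph with adjacency matrix $A$, and suppose there exist $\boldsymbol\beta,\boldsymbol\gamma,\boldsymbol\lambda\in(0,\infty)^V$ such that every induced subgraph $H$ of $G$ has local $(\boldsymbol\beta|_{V(H)},\boldsymbol\gamma|_{V(H)},\boldsymbol\lambda|_{V(H)})$-occupancy. Let $B=\mathrm{diag}(\boldsymbol\beta)$ and $\Gamma=\mathrm{diag}(\boldsymbol\gamma)$. Then every vector $\mathbf q\in\mathbb R^V$ with $\mathbf q\ge\mathbf 0$ and $(B+\Gamma A)\mathbf q\le\mathbf 1$ lies in the independence polytope $\mathrm{ind}(G)$.
   Context: The independence polytope $\mathrm{ind}(G)\subset\mathbb R^V$ is the convex hull of the indicator vectors $\mathbf x^I\in\{0,1\}^V$ of independent sets $I$ of $G$ (including $\emptyset$). For a graph $H$ and $\boldsymbol\beta,\boldsymbol\gamma,\boldsymbol\lambda\in[0,\infty)^{V(H)}$, $H$ has local $(\boldsymbol\beta,\boldsymbol\gamma,\boldsymbol\lambda)$-occupancy if for every $u\in V(H)$, $\beta_u\Pr_{H,\boldsymbol\lambda}(u\in X)+\gamma_u\sum_{v\in N_H(u)}\Pr_{H,\boldsymbol\lambda}(v\in X)\ge1$, where $X$ is drawn from the hard-core model on $H$: $\Pr_{H,\boldsymbol\lambda}(I)\propto\prod_{v\in I}\lambda_v$ over independent sets $I$ of $H$. Vector inequalities are entrywise. *)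

(* Defs.v *)
From mathcomp Require Import all_boot all_order all_algebra.
From mathcomp Require Import reals.
Set Implicit Arguments. Unset Strict Implicit. Unset Printing Implicit Defensive.
Import Order.TTheory GRing.Theory Num.Theory.
Local Open Scope ring_scope.

Section Defs.
Variables (R : realType) (T : finType).

Definition simple_graph (e : rel T) : Prop :=
  (forall x, ~~ e x x) /\ (forall x y, e x y = e y x).

Definition independent (e : rel T) (I : {set T}) : bool :=
  [forall x in I, forall y in I, ~~ e x y].

Definition hc_weight (lam : T -> R) (I : {set T}) : R := \prod_(v in I) lam v.

(* Partition function of the hard-core model on the induced subgraph G[S]:
   independent sets of G[S] are the independent sets of G contained in S. *)
Definition hc_Z (e : rel T) (lam : T -> R) (S : {set T}) : R :=
  \sum_(I : {set T} | (I \subset S) && independent e I) hc_weight lam I.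

Definition hc_occ (e : rel T) (lam : T -> R) (S : {set T}) (u : T) : R :=
  (\sum_(I : {set T} | [&& I \subset S, independent e I & u \in I])
      hc_weight lam I) / hc_Z e lam S.

Definition local_occupancy (e : rel T) (beta gamma lam : T -> R)
    (S : {set T}) : Prop :=
  forall u, u \in S ->
    beta u * hc_occ e lam S u
      + gamma u * (\sum_(v in S | e u v) hc_occ e lam S v) >= 1.

Definition BGA_apply (e : rel T) (beta gamma q : T -> R) (u : T) : R :=
  beta u * q u + gamma u * (\sum_(v | e u v) q v).

(* Independence polytope: convex hull of indicator vectors of independent
   sets (including the empty set). *)
Definition in_ind_polytope (e : rel T) (q : T -> R) : Prop :=
  exists mu : {set T} -> R,
    [/\ forall I, 0 <= mu I,
        forall I, ~~ independent e I -> mu I = 0,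
        \sum_(I : {set T}) mu I = 1 &
        forall x, q x = \sum_(I : {set T} | x \in I) mu I].

End Defs.

(* Main.v *)
Require Import Defs.
From mathcomp Require Import all_boot all_order all_algebra.
From mathcomp Require Import reals.
From mathcomp Require Import ring lra.
Import Order.TTheory GRing.Theory Num.Theory.
Local Open Scope ring_scope.
Set Implicit Arguments. Unset Strict Implicit.

Section Aux.
Variables (R : realType) (T : finType) (e : rel T) (lam : T -> R).
Hypothesis irr : forall x, ~~ e x x.
Hypothesis lam_pos : forall v, 0 < lam v.

Lemma minimizer (S : {set T}) (f : T -> R) :
  S != set0 -> exists2 u, u \in S & forall v, v \in S -> f u <= f v.
Proof.
case/set0Pn => x Hx.
case: (@arg_minP _ _ T x (mem S) f Hx) => u Hu Hmin.
by exists u.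
Qed.

Lemma hc_weight_ge0 (I : {set T}) : 0 <= hc_weight lam I.
Proof. by apply: prodr_ge0 => v _; apply: ltW. Qed.

Lemma hc_weight_gt0 (I : {set T}) : 0 < hc_weight lam I.
Proof. by apply: prodr_gt0 => v _. Qed.

Lemma indep0 : independent e set0.
Proof. by apply/forallP => x; rewrite in_set0. Qed.

Lemma indep1 (u : T) : independent e [set u].
Proof.
apply/forallP => x; apply/implyP; rewrite in_set1 => /eqP ->.
apply/forallP => y; apply/implyP; rewrite in_set1 => /eqP ->.
exact: irr.
Qed.

Lemma hcZ_gt0 (S : {set T}) : 0 < hc_Z e lam S.
Proof.
rewrite /hc_Z (bigD1 set0) /=; last by rewrite sub0set indep0.
apply: ltr_pwDl; first exact: hc_weight_gt0.
by apply: sumr_ge0 => I _; apply: hc_weight_ge0.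
Qed.

Lemma hc_occ_out (S : {set T}) (v : T) : v \notin S -> hc_occ e lam S v = 0.
Proof.
move=> Hv; rewrite /hc_occ big1 ?mul0r // => I /and3P [HS _ HI].
by move: Hv; rewrite (subsetP HS _ HI).
Qed.

Lemma hc_occ_ge0 (S : {set T}) (v : T) : 0 <= hc_occ e lam S v.
Proof.
apply: divr_ge0; last exact: ltW (hcZ_gt0 S).
by apply: sumr_ge0 => I _; apply: hc_weight_ge0.
Qed.

Lemma hc_occ_gt0 (S : {set T}) (v : T) : v \in S -> 0 < hc_occ e lam S v.
Proof.
move=> Hv; apply: divr_gt0; last exact: hcZ_gt0.
rewrite (bigD1 [set v]) /=; last by rewrite sub1set Hv indep1 set11.
apply: ltr_pwDl; first exact: hc_weight_gt0.
by apply: sumr_ge0 => I _; apply: hc_weight_ge0.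
Qed.

Definition pi_S (S : {set T}) (I : {set T}) : R :=
  if (I \subset S) && independent e I then hc_weight lam I / hc_Z e lam S else 0.

Lemma pi_S_sum (S : {set T}) : \sum_(I : {set T}) pi_S S I = 1.
Proof.
rewrite /pi_S -big_mkcond /= -mulr_suml -/(hc_Z e lam S) divff //.
exact: lt0r_neq0 (hcZ_gt0 S).
Qed.

Lemma pi_S_occ (S : {set T}) (x : T) : \sum_(I : {set T} | x \in I) pi_S S I = hc_occ e lam S x.
Proof.
rewrite /hc_occ mulr_suml big_mkcond [RHS]big_mkcond /=.
apply: eq_bigr => I _; rewrite /pi_S.
by case: (x \in I); case: (I \subset S); case: (independent e I).
Qed.


Variables (beta gamma : T -> R).
Hypothesis beta_pos : forall v, 0 < beta v.
Hypothesis gamma_pos : forall v, 0 < gamma v.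
Hypothesis occ : forall S : {set T}, local_occupancy e beta gamma lam S.

Definition supp (r : T -> R) : {set T} := [set v | 0 < r v].

Lemma BGA_ge0 (r : T -> R) u : (forall v, 0 <= r v) -> 0 <= BGA_apply e beta gamma r u.
Proof.
move=> r0; rewrite /BGA_apply; apply: addr_ge0; apply: mulr_ge0.
- exact: ltW.
- exact: r0.
- exact: ltW.
- by apply: sumr_ge0 => v _.
Qed.

Lemma base_case (r : T -> R) (s : R) : (forall v, 0 <= r v) -> supp r = set0 -> 0 <= s ->
  exists mu : {set T} -> R,
    [/\ forall I, 0 <= mu I, forall I, ~~ independent e I -> mu I = 0,
        \sum_(I : {set T}) mu I <= s &
        forall x, r x = \sum_(I : {set T} | x \in I) mu I].
Proof.
move=> r0 Hs s0; exists (fun _ => 0); split => //.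
- by rewrite big1.
- move=> x; rewrite big1 //; apply/eqP; rewrite eq_le r0 andbT.
  rewrite leNgt; apply/negP => Hx.
  by have := in_set0 x; rewrite -Hs inE Hx.
Qed.

Lemma main_ind n : forall (r : T -> R) (s : R), (forall v, 0 <= r v) ->
  (#|supp r| <= n)%N ->
  (forall u, 0 < r u -> BGA_apply e beta gamma r u <= s) -> 0 <= s ->
  exists mu : {set T} -> R,
    [/\ forall I, 0 <= mu I, forall I, ~~ independent e I -> mu I = 0,
        \sum_(I : {set T}) mu I <= s &
        forall x, r x = \sum_(I : {set T} | x \in I) mu I].
Proof.
elim: n => [|n IH] r s r0 Hcard Hpot s0.
  apply: base_case => //; apply/eqP; rewrite -cards_eq0 -leqn0 //.
have [Hs|HS] := eqVneq (supp r) set0; first exact: base_case.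
set S := supp r.
pose p := hc_occ e lam S.
have [u0 Hu0 Hmin] := minimizer (fun v => r v / p v) HS.
have pu0 : 0 < p u0 by apply: hc_occ_gt0.
have ru0 : 0 < r u0 by move: Hu0; rewrite inE.
pose d := r u0 / p u0.
have d0 : 0 < d by apply: divr_gt0.
pose r' := fun v => r v - d * p v.
have dp v : 0 <= d * p v by apply: mulr_ge0; [exact: ltW | exact: hc_occ_ge0].
have r'0 v : 0 <= r' v.
  rewrite /r' subr_ge0; case: (boolP (v \in S)) => Hv.
    have pv : 0 < p v by apply: hc_occ_gt0.
    by rewrite -ler_pdivlMr //; apply: Hmin.
  by rewrite /p hc_occ_out // mulr0.
have r'le v : r' v <= r v by rewrite /r' lerBlDr lerDl.
have r'u0 : r' u0 = 0 by rewrite /r' /d divfK ?subrr // lt0r_neq0.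
have Hprop : supp r' \proper S.
  apply/properP; split.
    by apply/subsetP => v; rewrite !inE => /lt_le_trans; apply.
  by exists u0 => //; rewrite inE r'u0 ltxx.
have Hlin u : BGA_apply e beta gamma r u =
    BGA_apply e beta gamma r' u + d * BGA_apply e beta gamma p u.
  rewrite /BGA_apply.
  have -> : \sum_(v | e u v) r v = \sum_(v | e u v) r' v + d * \sum_(v | e u v) p v.
    by rewrite mulr_sumr -big_split; apply: eq_bigr => v _; rewrite /r' /= subrK.
  have -> : r u = r' u + d * p u by rewrite /r' /= subrK.
  ring.
have Hocc u : u \in S -> 1 <= BGA_apply e beta gamma p u.
  move=> Hu; have := occ Hu; rewrite /BGA_apply.
  have -> : \sum_(v in S | e u v) hc_occ e lam S v = \sum_(v | e u v) p v.
    rewrite big_mkcond [RHS]big_mkcond; apply: eq_bigr => v _.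
    case: (boolP (v \in S)) => Hv //=.
    by case: (e u v) => //; rewrite /p hc_occ_out.
  by [].
have s'0 : 0 <= s - d.
  have := Hpot u0 ru0; rewrite Hlin => H.
  have H1 := Hocc u0 Hu0.
  have H2 := BGA_ge0 u0 r'0.
  rewrite subr_ge0; apply: le_trans H.
  rewrite -[d in d <= _]addr0 addrC; apply: lerD => //.
  by rewrite -[d in d <= _]mulr1 ler_wpM2l // ltW.
have [mu' [mu'0 mu'i mu's mu'c]] : exists mu' : {set T} -> R,
    [/\ forall I, 0 <= mu' I, forall I, ~~ independent e I -> mu' I = 0,
        \sum_(I : {set T}) mu' I <= s - d &
        forall x, r' x = \sum_(I : {set T} | x \in I) mu' I].
  apply: IH => //.
  - by rewrite -ltnS; apply: leq_trans (proper_card Hprop) Hcard.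
  - move=> u Hu.
    have HuS : u \in S by rewrite inE; apply: lt_le_trans Hu (r'le u).
    have Hru : 0 < r u by move: HuS; rewrite inE.
    have := Hpot u Hru; rewrite Hlin => H.
    have H1 := Hocc u HuS.
    have H3 : d <= d * BGA_apply e beta gamma p u.
      by rewrite -[d in d <= _]mulr1 ler_wpM2l // ltW.
    by rewrite lerBrDr; apply: le_trans H; apply: lerD.
exists (fun I => mu' I + d * pi_S S I); split.
- move=> I; apply: addr_ge0 => //; apply: mulr_ge0; first exact: ltW.
  rewrite /pi_S; case: ifP => // _; apply: divr_ge0; first exact: hc_weight_ge0.
  exact: ltW (hcZ_gt0 _).
- move=> I HI; rewrite mu'i // /pi_S (negbTE HI) andbF mulr0 addr0 //.
- by rewrite big_split /= -mulr_sumr pi_S_sum // mulr1 -lerBrDr.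
- move=> x; rewrite big_split /= -mulr_sumr pi_S_occ // -mu'c /r' -/p subrK //.
Qed.

End Aux.

Theorem theorem5p1 (R : realType) (T : finType) (e : rel T)
    (beta gamma lam : T -> R) :
  simple_graph e ->
  (forall v, 0 < beta v) -> (forall v, 0 < gamma v) -> (forall v, 0 < lam v) ->
  (forall S : {set T}, local_occupancy e beta gamma lam S) ->
  forall q : T -> R,
    (forall v, 0 <= q v) ->
    (forall u, BGA_apply e beta gamma q u <= 1) ->
    in_ind_polytope e q.
Proof.
move=> [irr _] bpos gpos lpos occ q q0 Hq.
have [mu [mu0 mui mus muc]] :=
  @main_ind R T e lam irr lpos beta gamma bpos gpos occ #|T| q 1 q0
    (max_card _) (fun u _ => Hq u) ler01.
pose c := 1 - \sum_(I : {set T}) mu I.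
exists (fun I => mu I + (if I == set0 then c else 0)); split.
- move=> I; apply: addr_ge0 => //; case: ifP => // _; rewrite /c subr_ge0 //.
- move=> I HI; rewrite mui //; case: eqP => [E|_]; last by rewrite addr0.
  by move: HI; rewrite E indep0.
- by rewrite big_split /= -big_mkcond big_pred1_eq /c addrC subrK.
- move=> x; rewrite big_split /=.
  have -> : \sum_(I : {set T} | x \in I) (if I == set0 then c else 0) = 0.
    apply: big1 => I HI; case: eqP => // E; by move: HI; rewrite E in_set0.
  by rewrite addr0.
Qed.
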